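(* Let $m\ge2$, $1\le p<\infty$ and $1\le j\le m$. Then for all $s\in\mathbb R$, $$\sum_{n\in\mathbb N^m,\ |n|=k}|sn_j-1|^p\approx k^{p+m-1}|s|^p+k^{m-1},$$ where the constants in $\approx$ may depend on $p$ and $m$ but not on $k$ or $s$.
   Context: For quantities $F_k,G_k$ depending on $k\in\mathbb N$, $F_k\approx G_k$ means there are positive constants $A,B,k_0$ with $AG_k\le F_k\le BG_k$ for all $k\ge k_0$. $|n|=n_1+\dots+n_m$. *)

(* Defs.v *)
From HB Require Import structures.
From mathcomp Require Import all_boot all_order all_algebra.
From mathcomp Require Import all_classical all_reals all_analysis.
Set Implicit Arguments. Unset Strict Implicit. Unset Printing Implicit Defensive.
Import Order.TTheory GRing.Theory Num.Theory.
Local Open Scope ring_scope.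

Definition mi_abs (m : nat) (n : 'I_m -> nat) : nat := (\sum_(i < m) n i)%N.

(* Multi-indices n in N^m with |n| = k: every entry is <= k, so they are exactly
   the n : {ffun 'I_m -> 'I_k.+1} (values read as nats) with |n| = k. *)
Definition lhs4p4 (R : realType) (m : nat) (p s : R) (j : 'I_m) (k : nat) : R :=
  \sum_(n : {ffun 'I_m -> 'I_k.+1} | mi_abs (fun i => nat_of_ord (n i)) == k)
     powR `|s * (nat_of_ord (n j))%:R - 1| p.

Definition rhs4p4 (R : realType) (m : nat) (p s : R) (k : nat) : R :=
  powR k%:R (p + (m - 1)%:R) * powR `|s| p + (k ^ (m - 1))%:R.

(* Main.v *)
Require Import Defs.
From HB Require Import structures.
From mathcomp Require Import all_boot all_order all_algebra.
From mathcomp Require Import all_classical all_reals all_analysis.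
From mathcomp Require Import zify ring lra.
Import Order.TTheory GRing.Theory Num.Theory.
Definition MI (m k : nat) : {ffun 'I_m -> 'I_k.+1} -> bool :=
  fun n => mi_abs (fun i => nat_of_ord (n i)) == k.

Lemma sum_split (m' : nat) (i0 : 'I_m'.+1) (f : 'I_m'.+1 -> nat) :
  (\sum_(i < m'.+1) f i = f i0 + \sum_(i < m') f (lift i0 i))%N.
Proof. by rewrite (bigD1_ord i0) //=. Qed.

Lemma count_ub (m' k : nat) (i0 : 'I_m'.+1) :
  (#|[set n | MI m'.+1 k n]| <= k.+1 ^ m')%N.
Proof.
pose psi (n : {ffun 'I_m'.+1 -> 'I_k.+1}) : {ffun 'I_m' -> 'I_k.+1} :=
  [ffun i => n (lift i0 i)].
have inj : {in [set n | MI m'.+1 k n] &, injective psi}.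
  move=> n1 n2; rewrite !inE /MI /mi_abs => /eqP h1 /eqP h2 e.
  have e' : forall i, n1 (lift i0 i) = n2 (lift i0 i).
    by move=> i; have := congr1 (fun g : {ffun 'I_m' -> 'I_k.+1} => g i) e; rewrite /psi !ffunE.
  apply/ffunP => i; case: (unliftP i0 i) => [i'|] -> //.
  apply: val_inj => /=.
  move: h1 h2; rewrite !(sum_split _ i0).
  rewrite (eq_bigr (fun i => nat_of_ord (n2 (lift i0 i)))); last by move=> x _; rewrite e'.
  by move=> h1 h2; move: (etrans h1 (esym h2)) => /eqP; rewrite eqn_add2r => /eqP.
rewrite -(card_in_imset inj).
apply: leq_trans (max_card _) _.
by rewrite card_ffun !card_ord.
Qed.

Lemma arith1 (S S' k q m' : nat) : 8 * m'.+1 * q <= k -> S = S' -> (S <= m' * q ->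
  (k - S + S' == k) && (7 * k <= 8 * (k - S)))%N.
Proof. move=> h2 <- h1; apply/andP; split; [apply/eqP|]; nia. Qed.

Lemma count_lb (m' k : nat) (i0 : 'I_m'.+1) :
  ((k %/ (8 * m'.+1)).+1 ^ m' <=
   #|[set n | MI m'.+1 k n && (7 * k <= 8 * n i0)%N]|)%N.
Proof.
set q := k %/ (8 * m'.+1).
have hq : (8 * m'.+1 * q <= k)%N by rewrite mulnC leq_trunc_div.
pose phi (g : {ffun 'I_m' -> 'I_q.+1}) : {ffun 'I_m'.+1 -> 'I_k.+1} :=
  [ffun i => match unlift i0 i with
             | Some i' => inord (g i')
             | None => inord (k - \sum_(i' < m') g i') end].
have hS : forall g : {ffun 'I_m' -> 'I_q.+1}, (\sum_(i' < m') g i' <= m' * q)%N.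
  move=> g; have -> : (m' * q = \sum_(i < m') q)%N by rewrite sum_nat_const card_ord.
  by apply: leq_sum => i _; rewrite -ltnS.
have hgk : forall (g : {ffun 'I_m' -> 'I_q.+1}) i, (g i < k.+1)%N.
  move=> g i; have := ltn_ord (g i); lia.
have inj : injective phi.
  move=> g1 g2 e; apply/ffunP => i; apply: val_inj.
  have := congr1 (fun n : {ffun 'I_m'.+1 -> 'I_k.+1} => nat_of_ord (n (lift i0 i))) e.
  by rewrite /phi /= !ffunE liftK /= !inordK.
have -> : (q.+1 ^ m' = #|[set: {ffun 'I_m' -> 'I_q.+1}]|)%N by rewrite cardsT card_ffun !card_ord.
rewrite -(card_imset _ inj).
apply: subset_leq_card; apply/fintype.subsetP => n /imsetP [g _ ->].
rewrite inE /MI /mi_abs (sum_split _ i0).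
rewrite (eq_bigr (fun i => nat_of_ord (g i))); last first.
  by move=> i _; rewrite ffunE liftK inordK.
rewrite ffunE unlift_none inordK; last by lia.
have H := @arith1 _ _ _ _ _ hq (erefl _) (hS g). exact H.
Qed.
Local Open Scope ring_scope.
Lemma L1 (R : realType) (m : nat) (p s : R) (j : 'I_m) (k : nat) (B0 : R) :
  (forall n : {ffun 'I_m -> 'I_k.+1}, powR `|s * (nat_of_ord (n j))%:R - 1| p <= B0) ->
  lhs4p4 p s j k <= #|[set n | MI m k n]|%:R * B0.
Proof.
move=> H; rewrite /lhs4p4.
apply: le_trans (ler_sum _ (fun n _ => H n)) _.
by rewrite sumr_const cardsE mulr_natl.
Qed.

Lemma L2 (R : realType) (m : nat) (p s : R) (j : 'I_m) (k : nat) (c0 : R)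
  (Q : {ffun 'I_m -> 'I_k.+1} -> bool) :
  (forall n, MI m k n -> Q n -> c0 <= powR `|s * (nat_of_ord (n j))%:R - 1| p) ->
  #|[set n | MI m k n && Q n]|%:R * c0 <= lhs4p4 p s j k.
Proof.
move=> H; rewrite /lhs4p4 (bigID Q) /=.
rewrite -[X in X <= _]addr0; apply: lerD; last by apply: sumr_ge0 => n _; exact: powR_ge0.
rewrite mulr_natl cardsE -sumr_const; apply: ler_sum => n; rewrite ?inE => /andP [h1 h2].
exact: H.
Qed.
Lemma UBt (R : realType) (p s t K : R) : 0 <= p -> 0 <= t -> t <= K ->
  powR `|s*t - 1| p <= powR 2 p * (powR `|s| p * powR K p + 1).
Proof.
move=> hp ht0 htK.
have hK : 0 <= K by apply: le_trans htK.
have hn : `|s*t-1| <= `|s|*K + 1.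
  rewrite ler_norml; case: (lerP 0 s) => hs;
    [rewrite ger0_norm // | rewrite ltr0_norm //]; apply/andP; split; nra.
have hX := powR_ge0 `|s| p; have hY := powR_ge0 K p; have h2 := powR_ge0 2 p.
case: (lerP (`|s|*K) 1) => h1.
- apply: (@le_trans _ _ (powR 2 p)).
  + by apply: ge0_ler_powR => //; rewrite ?nnegrE //; lra.
  + rewrite -[X in X <= _]mulr1; apply: ler_wpM2l => //.
    by rewrite lerDr mulr_ge0.
- apply: (@le_trans _ _ (powR (2 * (`|s| * K)) p)).
  + by apply: ge0_ler_powR => //; rewrite ?nnegrE //; nra.
  + rewrite powRM // ?powRM // ?normr_ge0 //.
    2: by rewrite mulr_ge0.
    by apply: ler_wpM2l => //; rewrite lerDl.
Qed.

Lemma pair_le (m : nat) (n : 'I_m -> nat) (i i' : 'I_m) : i' != i ->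
  (n i + n i' <= \sum_(l < m) n l)%N.
Proof.
move=> ne; rewrite (bigD1 i) //= (bigD1 i') /=; last by rewrite ne.
by rewrite addnA leq_addr.
Qed.

Lemma CLB (R : realType) (m' k : nat) (i0 : 'I_m'.+1) :
  (k%:R : R) ^+ m' * ((8 * m'.+1)%:R)^-1 ^+ m' <=
  #|[set n | MI m'.+1 k n && (7 * k <= 8 * nat_of_ord (n i0))%N]|%:R.
Proof.
have hd : (0 < 8 * m'.+1)%N by [].
have hq : (k%:R : R) / (8 * m'.+1)%:R <= (k %/ (8 * m'.+1)).+1%:R.
  rewrite ler_pdivrMr ?ltr0n // -natrM ler_nat; exact: ltnW (ltn_ceil _ hd).
apply: (@le_trans _ _ (((k %/ (8 * m'.+1)).+1 ^ m')%:R)); last first.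
  by rewrite ler_nat; exact: count_lb.
rewrite -exprMn natrX; apply: lerXn2r => //; rewrite nnegrE //.
Qed.

Lemma termb (R : realType) (s t K : R) : 0 <= K -> 0 <= t -> 7 * K <= 8 * t ->
  (s < 0) || (4 < s * K) -> Num.max 1 (`|s| * K / 4) <= `|s * t - 1|.
Proof.
move=> K0 t0 h78 hc; rewrite ge_max.
case: (ltrP s 0) => hs.
  rewrite (ltr0_norm hs); apply/andP; split; rewrite ler_normr; apply/orP; right.
    have : s * t <= 0 by rewrite nmulr_rle0.
    lra.
  have : s * K <= 0 by rewrite nmulr_rle0.
  have := ler_wnM2l (ltW hs) h78; lra.
have hsK : 4 < s * K by move: hc; rewrite ltNge hs.
rewrite (ger0_norm hs); apply/andP; split; rewrite ler_normr; apply/orP; left;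
  have := ler_wpM2l hs h78; lra.
Qed.

Theorem lemma4p4 (R : realType) (m : nat) (p : R) :
  (2 <= m)%N -> 1 <= p ->
  exists (A B : R) (k0 : nat), 0 < A /\ 0 < B /\
    forall (j : 'I_m) (s : R) (k : nat), (k0 <= k)%N ->
      A * rhs4p4 m p s k <= lhs4p4 p s j k /\ lhs4p4 p s j k <= B * rhs4p4 m p s k.
Proof.
case: m => [//|m'] hm hp.
have hp0 : 0 <= p by lra.
pose c : R := ((8 * m'.+1)%:R)^-1 ^+ m'.
pose h : R := powR (2^-1) p.
pose V : R := powR 4 p.
pose P4 : R := V + 1.
have c0 : 0 < c by rewrite exprn_gt0 // invr_gt0 ltr0n.
have h0 : 0 < h by rewrite powR_gt0 // invr_gt0.
have h1 : h <= 1.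
  apply: le_trans (ge1r_powR _ hp) _; last by lra.
  by apply/andP; split; lra.
have V1 : 1 <= V by apply: le_trans (le1r_powR _ hp); lra.
have P40 : 0 < P4 by rewrite /P4; lra.
exists (c * h / (2 * P4)), (2 ^+ m' * powR 2 p), 1%N.
split; first by rewrite divr_gt0 ?mulr_gt0.
split; first by rewrite mulr_gt0 ?exprn_gt0 ?powR_gt0.
move=> j s k hk.
set K : R := k%:R.
have K1 : 1 <= K by rewrite /K ler1n.
have Erhs : rhs4p4 m'.+1 p s k = K ^+ m' * (powR `|s| p * powR K p + 1).
  rewrite /rhs4p4 subSS subn0 powRD; last by apply/implyP => _; rewrite pnatr_eq0 -lt0n.
  rewrite powR_mulrn ?ler0n // natrX -/K; ring.
rewrite Erhs.
set X := powR `|s| p * powR K p.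
have X0 : 0 <= X by rewrite mulr_ge0 ?powR_ge0.
have Km0 : 0 <= K ^+ m' by rewrite exprn_ge0 // (le_trans _ K1).
split; last first.
  apply: le_trans (@L1 _ _ _ _ _ _ (powR 2 p * (X + 1)) _) _.
    move=> n; apply: UBt => //.
    by rewrite /K ler_nat -ltnS.
  have hcard : #|[set n | MI m'.+1 k n]|%:R <= 2 ^+ m' * K ^+ m' :> R.
    apply: (@le_trans _ _ ((k.+1 ^ m')%:R)); first by rewrite ler_nat (count_ub _ _ ord0).
    rewrite natrX -exprMn; apply: lerXn2r; rewrite ?nnegrE ?ler0n //; first by lra.
    by rewrite -addn1 natrD -/K; lra.
  apply: le_trans (ler_wpM2r _ hcard) _; first by rewrite mulr_ge0 ?powR_ge0 //; lra.
  by rewrite le_eqVlt; apply/orP; left; apply/eqP; ring.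
have HA : forall Y, 0 <= Y -> (X + 1) <= 2 * V * Y / h ->
    c * Y * K ^+ m' <= lhs4p4 p s j k -> c * h / (2 * P4) * (K ^+ m' * (X + 1)) <= lhs4p4 p s j k.
  move=> Y Y0 hX hL; apply: le_trans hL.
  apply: (@le_trans _ _ (c * h / (2 * P4) * (K ^+ m' * (2 * V * Y / h)))).
    apply: ler_wpM2l; first by rewrite divr_ge0 ?mulr_ge0 //; lra.
    by apply: ler_wpM2l.
  have -> : c * h / (2 * P4) * (K ^+ m' * (2 * V * Y / h)) = (c * Y * K ^+ m') * (V / P4).
    by field; apply/andP; split; apply/lt0r_neq0.
  apply: ler_piMr; first by rewrite !mulr_ge0 //; lra.
  by rewrite ler_pdivrMr // /P4; lra.
case: (boolP ((0 <= s) && (s * K <= 4))) => [/andP [hs0 hsK] | hcase].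
  have [j' hj'] : exists j' : 'I_m'.+1, j' != j.
    case: (eqVneq j ord0) => e; last by exists ord0; rewrite eq_sym.
    exists ord_max; rewrite e; apply/eqP => /(congr1 val) /=; lia.
  have hL := @L2 _ _ p s j k h (fun n => (7 * k <= 8 * nat_of_ord (n j')))%N.
  apply: (HA h (ltW h0)).
    have XV : X <= V.
      rewrite /X -powRM ?normr_ge0 // /V; apply: ge0_ler_powR => //;
        rewrite ?nnegrE ?mulr_ge0 ?normr_ge0 //.
      by rewrite ger0_norm.
    rewrite mulfK; [lra | exact: lt0r_neq0].
  apply: le_trans (hL _).
    rewrite mulrAC; apply: ler_wpM2r; first exact: ltW.
    by rewrite mulrC; exact: CLB.
  move=> n; rewrite /MI /mi_abs => /eqP hn hq.
  have := @pair_le _ (fun i => nat_of_ord (n i)) _ _ hj'; rewrite hn => hle.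
  have h8 : (8 * n j <= k)%N.
    move: hle hq; clear; lia.
  have h8' : 8 * (n j)%:R <= K by rewrite /K -(ler_nat R) natrM in h8.
  have t0 : 0 <= (n j)%:R :> R by rewrite ler0n.
  apply: ge0_ler_powR => //; rewrite ?nnegrE //.
  rewrite ler_normr; apply/orP; right; have := ler_wpM2l hs0 h8'; lra.
rewrite negb_and -!ltNge in hcase.
have hL := @L2 _ _ p s j k (powR (Num.max 1 (`|s| * K / 4)) p)
   (fun n => (7 * k <= 8 * nat_of_ord (n j)))%N.
set M := Num.max 1 (`|s| * K / 4) in hL.
set W := powR M p in hL.
have M1 : 1 <= M by rewrite le_max lexx.
have W1 : 1 <= W by apply: le_trans M1 (le1r_powR M1 hp).
have sM : `|s| * K / 4 <= M by rewrite le_max lexx orbT.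
apply: (HA (h * W)); first by rewrite mulr_ge0 //; lra.
  have XV : X <= V * W.
    rewrite /X -powRM ?normr_ge0 // /V /W -powRM //; try lra.
    apply: ge0_ler_powR => //; rewrite ?nnegrE ?mulr_ge0 ?normr_ge0 //; try lra.
  have VW : W <= V * W by rewrite ler_peMl //; lra.
  have -> : 2 * V * (h * W) / h = 2 * (V * W) by field; exact: lt0r_neq0.
  lra.
apply: le_trans (hL _).
  apply: (@le_trans _ _ (c * W * K ^+ m')).
    have -> : c * (h * W) * K ^+ m' = h * (c * W * K ^+ m') by ring.
    apply: ler_piMl => //; rewrite !mulr_ge0 //; try lra; exact: ltW.
  rewrite mulrAC; apply: ler_wpM2r; first lra.
  by rewrite mulrC; exact: CLB.
move=> n _ hq.
have h78 : 7 * K <= 8 * (n j)%:R by rewrite /K -!natrM ler_nat.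
apply: ge0_ler_powR => //; rewrite ?nnegrE //; first lra.
apply: termb => //; by rewrite ?ler0n //; lra.
Qed.
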